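(* Let $X$ be a metric space. The following are equivalent: (1) $X$ is hereditarily Baire; (2) every Borel 1 function $f\colon X\to\mathbb R$ has (PCP).
   Context: A topological space is Baire if every nonempty open subset of it is nonmeager in it; it is hereditarily Baire if every nonempty closed subspace is Baire. $f\colon X\to\mathbb R$ is Borel 1 if $f^{-1}(V)$ is $F_\sigma$ for every open $V\subseteq\mathbb R$; it has (PCP) if for every nonempty closed $F\subseteq X$ the restriction $f|_F$ has a point of continuity. *)

(* Defs.v *)
From HB Require Import structures.
From mathcomp Require Import all_boot all_order all_algebra.
From mathcomp Require Import all_classical all_reals all_analysis borel_hierarchy.
Set Implicit Arguments. Unset Strict Implicit. Unset Printing Implicit Defensive.
Import Order.TTheory GRing.Theory Num.Theory.
Import numFieldNormedType.Exports.
Local Open Scope classical_set_scope.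

Definition nowhere_dense (T : topologicalType) (A : set T) : Prop :=
  (closure A)° = set0.

Definition meager (T : topologicalType) (A : set T) : Prop :=
  exists2 N : (set T)^nat, (forall n, nowhere_dense (N n)) & A `<=` \bigcup_n N n.

Definition Baire_space (T : topologicalType) : Prop :=
  forall U : set T, open U -> U !=set0 -> ~ meager U.

Definition hereditarily_Baire (T : topologicalType) : Prop :=
  forall F : set T, closed F -> F !=set0 -> Baire_space (set_type F).

Definition Borel1 (T : topologicalType) (R : realType) (f : T -> R) : Prop :=
  forall V : set R, open V -> Fsigma (f @^-1` V).

Definition PCP (T : topologicalType) (R : realType) (f : T -> R) : Prop :=
  forall F : set T, closed F -> F !=set0 ->
    exists x : set_type F, {for x, continuous (fun y : set_type F => f (set_val y))}.

(* Main.v *)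
Require Import Defs.
From HB Require Import structures.
From mathcomp Require Import all_boot all_order all_algebra.
From mathcomp Require Import all_classical all_reals all_analysis borel_hierarchy.
From mathcomp Require Import lra.
Import Order.TTheory GRing.Theory Num.Theory.
Import numFieldNormedType.Exports.
Local Open Scope classical_set_scope.
Section Top.
Context {T : topologicalType}.

Lemma Fsigma_bigcup (A : (set T)^nat) :
  (forall n, Fsigma (A n)) -> Fsigma (\bigcup_n A n).
Proof.
move=> hA.
have /choice[K hK] : forall n, exists K : (set T)^nat,
    (forall i, closed (K i)) /\ A n = \bigcup_i K i.
  by move=> n; case: (hA n) => K ? ?; exists K.
exists (fun k => match @unpickle (nat * nat)%type k with
                 | Some p => K p.1 p.2 | None => set0 end).
  move=> k; case: unpickle => [[n m]|] /=; [exact: (hK n).1 | exact: closed0].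
apply/seteqP; split.
  move=> x [n _]; rewrite (hK n).2 => -[m _ Kx].
  by exists (pickle (n, m)) => //; rewrite pickleK.
move=> x [k _]; case: unpickle => [[n m]|] //= Kx.
by exists n => //; rewrite (hK n).2; exists m.
Qed.

Lemma Fsigma_setU (A B : set T) : Fsigma A -> Fsigma B -> Fsigma (A `|` B).
Proof.
move=> hA hB.
have -> : A `|` B = \bigcup_n (if n is 0 then A else B).
  apply/seteqP; split.
    by move=> x [Ax|Bx]; [exists 0%N|exists 1%N].
  by move=> x [[|n] _ /=]; [left|right].
by apply: Fsigma_bigcup => -[|n].
Qed.

Lemma Fsigma_closedI (C A : set T) : closed C -> Fsigma A -> Fsigma (C `&` A).
Proof.
move=> cC [K cK ->]; exists (fun n => C `&` K n).
  by move=> n; exact: closedI.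
by rewrite setI_bigcupr.
Qed.

Lemma nd_boundary (C : set T) : closed C -> nowhere_dense (C `\` C°).
Proof.
move=> cC; rewrite /nowhere_dense; apply/seteqP; split=> // x hx.
have clx : closure (C `\` C°) x by exact: interior_subset.
have sub : closure (C `\` C°) `<=` C.
  by rewrite [X in _ `<=` X](closure_id C).1 //; apply: closure_subset => y [].
have : nbhs x C° by apply: nbhs_interior; exact: (interiorS sub).
by move=> /clx [y [[_ ny] iy]].
Qed.

Lemma open_minus_nd (O N : set T) : open O -> O !=set0 -> nowhere_dense N ->
  exists2 y, O y & ~ closure N y.
Proof.
move=> oO [x Ox] nN; apply: contrapT => hn.
have sub : O `<=` closure N.
  by move=> y Oy; apply: contrapT => ny; apply: hn; exists y.
have : (closure N)° x by apply: (interiorS sub); rewrite (interior_id O).1.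
by rewrite nN.
Qed.

End Top.

Local Open Scope ring_scope.

Lemma borel1_contpt (R : realType) (T : topologicalType) (g : T -> R) (x0 : T) :
  Baire_space T -> (forall V : set R, open V -> Fsigma (g @^-1` V)) ->
  exists x, {for x, continuous g}.
Proof.
move=> HB hg.
pose V k : set R := match @unpickle (rat * rat)%type k with
  | Some p => `]ratr p.1, ratr p.2[%classic | None => set0 end.
have oV k : open (V k).
  by rewrite /V; case: unpickle => [p|]; [exact: itv_open | exact: open0].
have /choice[K hK] : forall k, exists K : (set T)^nat,
    (forall i, closed (K i)) /\ g @^-1` V k = \bigcup_i K i.
  by move=> k; case: (hg _ (oV k)) => K ? ?; exists K.
pose N k := match @unpickle (nat * nat)%type k with
  | Some p => K p.1 p.2 `\` (K p.1 p.2)° | None => set0 end.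
have nN k : nowhere_dense (N k).
  rewrite /N; case: unpickle => [[k1 i]|] /=; first exact/nd_boundary/(hK k1).1.
  by rewrite /nowhere_dense closure0 interior0.
have [x Mx] : exists x, forall k, ~ N k x.
  apply: contrapT => hn; apply: (HB setT openT); first by exists x0.
  exists N => // y _; apply: contrapT => ny; apply: hn; exists y => k Nk.
  by apply: ny; exists k.
exists x; apply/cvgrPdist_lt => e e0.
have [a /andP[a1 a2]] : exists a : rat, (g x - e < ratr a) && (ratr a < g x).
  by have [a] := @rat_in_itvoo R (g x - e) (g x) ltac:(lra); rewrite in_itv /=; exists a.
have [b /andP[b1 b2]] : exists b : rat, (g x < ratr b) && (ratr b < g x + e).
  by have [b] := @rat_in_itvoo R (g x) (g x + e) ltac:(lra); rewrite in_itv /=; exists b.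
pose k := pickle (a, b).
have Vk y : V k (g y) = (ratr a < g y < ratr b).
  by rewrite /V /k pickleK /= in_itv.
have : (g @^-1` V k) x by rewrite /= Vk a2 b1.
rewrite (hK k).2 => -[i _ Kx].
have : (K k i)° x.
  apply: contrapT => nx; apply: (Mx (pickle (k, i))).
  by rewrite /N pickleK.
move=> /= nK; apply: filterS nK => y Ky.
have : (g @^-1` V k) y by rewrite (hK k).2; exists i.
rewrite /= Vk => /andP[c1 c2].
rewrite ltr_norml; apply/andP; split; lra.
Qed.

Lemma open_Fsigma (R : realType) (X : pseudoMetricType R) (U : set X) :
  open U -> Fsigma U.
Proof.
move=> oU.
pose A (n : nat) := [set x : X | ball x n.+1%:R^-1 `<=` U].
exists (fun n => closure (A n)); first by move=> n; exact: closed_closure.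
apply/seteqP; split.
  move=> x Ux.
  have : nbhs x U by move: oU; rewrite openE => /(_ _ Ux).
  rewrite nbhs_ballP => -[e e0 be].
  pose n := Num.Def.trunc e^-1.
  exists n => //; apply: subset_closure => y /= bxy; apply: be.
  apply: le_ball bxy; rewrite -[e]invrK lef_pV2 ?posrE ?invr_gt0 //.
  exact/ltW/truncnS_gt.
move=> y [n _ cy].
have /cy [z [Az bz]] : nbhs y (ball y n.+1%:R^-1) by apply: nbhsx_ballx.
exact/Az/ball_sym.
Qed.


Lemma nbhs_set_type {T : topologicalType} {F : set T} {x : set_type F}
  {Q : set (set_type F)} : nbhs x Q ->
  exists W : set T, [/\ open W, W (set_val x) & set_val @^-1` W `<=` Q].
Proof.
rewrite nbhsE => -[V [oV Vx VQ]]; case: oV => W oW WV.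
exists W; split => //; first by rewrite -WV in Vx.
by rewrite WV.
Qed.

Lemma set_type_open {T : topologicalType} {F : set T} {W : set T} :
  open W -> open (set_val @^-1` W : set (set_type F)).
Proof. by move=> oW; exists W. Qed.

Lemma Fsigma_and (T : topologicalType) (A : set T) (P : Prop) :
  Fsigma A -> Fsigma [set x | A x /\ P].
Proof.
move=> hA; case: (pselect P) => p.
  by rewrite (_ : [set x | A x /\ P] = A) //; apply/seteqP; split=> x // [].
rewrite (_ : [set x | A x /\ P] = set0); first exact/closed_Fsigma/closed0.
by apply/seteqP; split=> x // [].
Qed.

Section Back.
Context (R : realType) (T : topologicalType)
  (oFs : forall A : set T, open A -> Fsigma A)
  (F : set T) (cF : closed F) (U : set (set_type F)) (W : set T)
  (oW : open W) (UW : U = set_val @^-1` W) (U0 : U !=set0)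
  (N : (set (set_type F))^nat) (nN : forall n, nowhere_dense (N n))
  (UN : U `<=` \bigcup_n N n).

Local Definition G : set T := closure (set_val @` U).
Local Definition C (n : nat) : set T :=
  if n is m.+1 then G `&` closure (set_val @` N m) else G `\` W.
Local Definition L (n : nat) : set T :=
  [set x | C n x /\ forall i, (i < n)%N -> ~ C i x].
Local Definition f (x : T) : R :=
  if pselect (G x) then (2^-1)^+(xget 0%N [set n | L n x]) else 0.

Lemma GF : G `<=` F.
Proof.
have cl := (closure_id F).1 cF.
move=> x Gx; rewrite cl; move: Gx; apply: closure_subset.
by move=> y [s _ <-]; exact: set_valP.
Qed.

Lemma CG n : C n `<=` G.
Proof. by case: n => [|m] x []. Qed.

Lemma cC n : closed (C n).
Proof.
case: n => [|m] /=; first by rewrite setDE; apply: closedI; [exact: closed_closure | exact: open_closedC].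
by apply: closedI; exact: closed_closure.
Qed.

Lemma Gcover x : G x -> exists n, C n x.
Proof.
move=> Gx; case: (pselect (W x)) => Wx; last by exists 0%N.
have Fx := GF _ Gx.
pose s : set_type F := exist _ x (mem_set Fx).
have Us : U s by rewrite UW.
have [m _ Nm] := UN _ Us.
exists m.+1; split => //; apply: subset_closure; by exists s.
Qed.

Lemma Lex {x} : G x -> exists n, L n x.
Proof.
move/Gcover => ex.
have exb : exists n, `[< C n x >] by case: ex => n ?; exists n; apply/asboolP.
case: (ex_minnP exb) => m /asboolP Cm minm.
exists m; split => // i im Ci.
by have := minm i (asboolT Ci); rewrite leqNgt im.
Qed.

Lemma Luniq {n m x} : L n x -> L m x -> n = m.
Proof.
move=> [Cn hn] [Cm hm]; case: (ltngtP n m) => // nm.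
  by have := hm _ nm Cn.
by have := hn _ nm Cm.
Qed.

Lemma LG {n x} : L n x -> G x.
Proof. by move=> [/CG]. Qed.

Lemma fE {n x} : L n x -> f x = (2^-1)^+n.
Proof.
move=> Ln; rewrite /f; case: pselect => [Gx|]; last by have := LG Ln.
by rewrite (@xget_unique _ 0%N [set n | L n x] n Ln) // => m Lm; exact: Luniq Lm Ln.
Qed.

Lemma fNG {x} : ~ G x -> f x = 0.
Proof. by rewrite /f; case: pselect. Qed.

Lemma Step {V} : open V -> (V `&` W `&` F) !=set0 -> forall m,
  exists V', [/\ open V', V' `<=` V, (V' `&` W `&` F) !=set0 &
                forall z, V' z -> ~ closure (set_val @` N m) z].
Proof.
move=> oV [z [[Vz Wz] Fz]] m.
pose O : set (set_type F) := set_val @^-1` (V `&` W).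
have oO : open O := set_type_open (openI oV oW : open (V `&` W)).
have O0 : O !=set0 by exists (exist _ z (mem_set Fz)).
have [s Os ncl] := open_minus_nd O (N m) oO O0 (nN m).
have [B [nB NB]] : exists B, nbhs s B /\ ~ (N m `&` B !=set0).
  apply: contrapT => hn; apply: ncl => B nB; apply: contrapT => h.
  by apply: hn; exists B; split.
have [W'' [oW'' Ws sub]] := nbhs_set_type nB.
exists (V `&` W `&` W''); split.
- exact: openI (openI oV oW) oW''.
- by move=> y [[]].
- exists (set_val s); split; last exact: set_valP.
  by case: Os => Vs Wss; split => //; split => //; split.
- move=> y [[_ _] W''y] cly.
  have nby : nbhs y W'' by apply: open_nbhs_nbhs; split.
  have [_ [[t Nt <-] W''t]] := cly _ nby.
  by apply: NB; exists t; split => //; exact: sub.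
Qed.

Lemma KP {x} : G x -> forall B, open B -> B x -> forall k,
  exists y, [/\ G y, B y & forall i, (i <= k)%N -> ~ C i y].
Proof.
move=> Gx B oB Bx k.
have : exists V', [/\ open V', V' `<=` B, (V' `&` W `&` F) !=set0 &
    forall i z, (i < k)%N -> V' z -> ~ closure (set_val @` N i) z].
  elim: k => [|k [V' [oV' VB ne hV]]].
    exists B; split => //.
      have nbx : nbhs x B by apply: open_nbhs_nbhs; split.
      have [_ [[s Us <-] Bs]] := Gx B nbx.
      exists (set_val s); rewrite UW in Us.
      by split; [split | exact: set_valP].
  have [V'' [oV'' sub ne' h'']] := Step oV' ne k.
  exists V''; split => //; first exact: subset_trans sub VB.
  move=> i z; rewrite ltnS leq_eqVlt => /orP[/eqP -> | ik] V''z.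
    exact: h''.
  exact: hV i z ik (sub _ V''z).
case=> V' [oV' VB [y [[V'y Wy] Fy]] hV].
exists y; split.
- pose s : set_type F := exist _ y (mem_set Fy).
  apply: subset_closure; exists s => //; by rewrite UW.
- exact: VB.
- case=> [|i] ik; first by case.
  by move=> [_ cl]; exact: hV i y ik V'y cl.
Qed.

Lemma arith (K : realFieldType) (a p : K) :
  0 < a -> p <= 2^-1 * a -> `|a - p| < 2^-1 * a -> False.
Proof. move=> a0 pm h; have := ler_norm (a - p); lra. Qed.

Lemma nocont (x : set_type G) :
  ~ {for x, continuous (fun y : set_type G => f (set_val y))}.
Proof.
move=> cx; have Gx := set_valP x; have [n Ln] := Lex Gx.
have e0 : (0 : R) < (2^-1)^+n.+1 by apply: exprn_gt0; rewrite invr_gt0.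
move/cvgrPdist_lt: cx => /(_ _ e0) nb.
have [B [oB Bx sub]] := nbhs_set_type nb.
have [y [Gy By hy]] := KP Gx B oB Bx n.
have [m Lm] := Lex Gy.
have nm : (n < m)%N.
  by rewrite ltnNge; apply/negP => mn; exact: hy m mn Lm.1.
have := sub (exist _ y (mem_set Gy)) By; rewrite /= (fE Ln) (fE Lm).
have pm : (2^-1 : R)^+m <= (2^-1 : R)^+n.+1.
  by apply: ler_wiXn2l => //; rewrite ?invr_ge0 // invf_le1 // ler1n.
have a0 : (0 : R) < (2^-1)^+n by apply: exprn_gt0; rewrite invr_gt0.
move: pm; rewrite exprS => pm.
move=> h; apply: (@arith R _ _ a0); first exact: pm.
exact h.
Qed.

Lemma openO n : open [set x | forall i, (i < n)%N -> ~ C i x].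
Proof.
elim: n => [|n IH].
  rewrite (_ : [set x | _] = setT); first exact: openT.
  by apply/seteqP; split => x // _ i; rewrite ltn0.
rewrite (_ : [set x | _] = [set x | forall i, (i < n)%N -> ~ C i x] `&` ~` C n).
  by apply: openI => //; rewrite openC; exact: cC.
apply/seteqP; split => x /=.
  by move=> h; split => [i ii|]; [apply: h; exact: ltnW | exact: h].
move=> [h1 h2] i; rewrite ltnS leq_eqVlt => /orP[/eqP ->|]; first exact: h2.
exact: h1.
Qed.

Lemma Borel1f : Borel1 f.
Proof.
move=> V oV.
have -> : f @^-1` V = [set x | (~` G) x /\ V 0] `|`
    \bigcup_n [set x | L n x /\ V ((2^-1)^+n)].
  apply/seteqP; split => x /=.
    move=> Vfx; case: (pselect (G x)) => Gx.
      have [n Ln] := Lex Gx; right; exists n => //; split => //.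
      by rewrite -(fE Ln).
    by left; split => //; rewrite -(fNG Gx).
  case=> [[nG V0] | [n _ [Ln Vn]]]; first by rewrite fNG.
  by rewrite (fE Ln).
apply: Fsigma_setU.
  by apply/Fsigma_and/oFs; rewrite openC; exact: closed_closure.
apply: Fsigma_bigcup => n; apply: Fsigma_and.
rewrite (_ : L n = C n `&` [set x | forall i, (i < n)%N -> ~ C i x]) //.
exact/Fsigma_closedI/oFs/openO/cC.
Qed.

Lemma no_PCP : exists f : T -> R, Borel1 f /\ ~ PCP f.
Proof.
exists f; split; first exact: Borel1f.
move=> h.
have G0 : G !=set0.
  by case: U0 => s Us; exists (set_val s); apply: subset_closure; exists s.
have [x hx] := h G (@closed_closure _ (set_val @` U)) G0.
exact: nocont hx.
Qed.

End Back.

Lemma forward (R : realType) (T : topologicalType) :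
  hereditarily_Baire T -> forall f : T -> R, Borel1 f -> PCP f.
Proof.
move=> HB f hf F cF [x0 Fx0].
apply: (@borel1_contpt R (set_type F) (f \o set_val) (exist _ x0 (mem_set Fx0))).
  by apply: HB => //; exists x0.
move=> V oV; case: (hf V oV) => K cK eK.
exists (fun n => set_val @^-1` K n).
  move=> n; rewrite (_ : _ @^-1` _ = ~` (set_val @^-1` (~` K n))); last first.
    by rewrite preimage_setC setCK.
  rewrite closedC.
  by apply: set_type_open; rewrite openC.
rewrite comp_preimage eK preimage_bigcup //.
Qed.

Theorem corollary2p10 (R : realType) (X : pseudoMetricType R)
  (HX : hausdorff_space X) :
  hereditarily_Baire X <-> (forall f : X -> R, Borel1 f -> PCP f).
Proof.
split; first exact: forward.
move=> H F cF F0 U oU U0 [N nN UN].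
have [W oW UW] : exists2 W : set X, open W & U = set_val @^-1` W.
  by case: oU => W oW <-; exists W.
have [f [bf npf]] := @no_PCP R X (@open_Fsigma R X) F cF U W oW UW U0 N nN UN.
exact: npf (H f bf).
Qed.
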